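(* Let $N,P>0$ and $L\in\mathbb{Z}_{\ge2}$. If there is a $(P,N,L-1)$-list-decodable code $\mathcal{C}\subset\mathcal{B}^n(\sqrt{nP})$ of rate $R$, then there exists a code $\mathcal{C}'\subset\mathcal{S}^n(0,\sqrt{(n+1)P})\subset\mathbb{R}^{n+1}$ with $|\mathcal{C}'|=|\mathcal{C}|$ (so of rate $R$ asymptotically) which is $\left(P,\frac{nN}{n+1},L-1\right)$-list-decodable in $\mathbb{R}^{n+1}$, i.e. every ball in $\mathbb{R}^{n+1}$ of radius $\sqrt{(n+1)\cdot\frac{nN}{n+1}}=\sqrt{nN}$ contains at most $L-1$ points of $\mathcal{C}'$.
   Context: $\mathcal{B}^m(y,r)$ is the closed Euclidean ball in $\mathbb{R}^m$ of radius $r$ centered at $y$, $\mathcal{B}^m(r)=\mathcal{B}^m(0,r)$, and $\mathcal{S}^{m-1}(0,r)=\{x\in\mathbb{R}^m:\|x\|_2=r\}$. For $P,N>0$, $L\in\mathbb{Z}_{\ge2}$, a finite set $\mathcal{C}\subseteq\mathcal{B}^m(\sqrt{mP})$ is $(P,N,L-1)$-list-decodable if $|\mathcal{C}\cap\mathcal{B}^m(y,\sqrt{mN})|\le L-1$ for every $y\in\mathbb{R}^m$. Its rate is $\frac1m\ln|\mathcal{C}|$. *)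

(* Defs.v *)
From HB Require Import structures.
From mathcomp Require Import all_boot all_order all_algebra.
From mathcomp Require Import finmap.
Set Implicit Arguments. Unset Strict Implicit. Unset Printing Implicit Defensive.
Import Order.TTheory GRing.Theory Num.Theory.
Local Open Scope ring_scope.
Local Open Scope fset_scope.

Definition norm2 (R : rcfType) (m : nat) (x : 'rV[R]_m) : R :=
  Num.sqrt (\sum_(i < m) x ord0 i ^+ 2).

Definition list_decodable (R : rcfType) (m : nat) (P N : R) (L : nat)
  (C : {fset 'rV[R]_m}) : Prop :=
  (forall x, x \in C -> norm2 x <= Num.sqrt (m%:R * P)) /\
  (forall y : 'rV[R]_m,
     (#|` [fset x in C | (norm2 (x - y) <= Num.sqrt (m%:R * N))%R] | <= L - 1)%N).

(* Main.v *)
Require Import Defs.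
From HB Require Import structures.
From mathcomp Require Import all_boot all_order all_algebra.
From mathcomp Require Import finmap.
Import Order.TTheory GRing.Theory Num.Theory.
Local Open Scope ring_scope.
Local Open Scope fset_scope.

Set Implicit Arguments. Unset Strict Implicit.
Section Aux.
Local Open Scope ring_scope.
Variable R : rcfType.
Variable n : nat.

Definition sq (x : 'rV[R]_n) : R := \sum_(i < n) x ord0 i ^+ 2.

Definition lft (t : R) (x : 'rV[R]_n) : 'rV[R]_n.+1 :=
  \row_(i < n.+1) oapp (fun j : 'I_n => x ord0 j) t (unlift ord_max i).

Lemma sum_split (f : 'I_n.+1 -> R) :
  \sum_(i < n.+1) f i = f ord_max + \sum_(i < n) f (lift ord_max i).
Proof. by rewrite (bigD1_ord ord_max). Qed.

Lemma sq_ge0 x : 0 <= sq x.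
Proof. by apply: sumr_ge0 => i _; rewrite sqr_ge0. Qed.

Lemma lft_inj t : injective (lft t).
Proof.
move=> x y /rowP H; apply/rowP => j.
by have := H (lift ord_max j); rewrite !mxE liftK.
Qed.
End Aux.

Theorem mainTheorem3 (R : rcfType) (n : nat) (P N : R) (L : nat) :
  0 < P -> 0 < N -> (2 <= L)%N ->
  forall C : {fset 'rV[R]_n}, list_decodable P N L C ->
  exists C' : {fset 'rV[R]_n.+1},
    (forall x, x \in C' -> norm2 x = Num.sqrt (n.+1%:R * P)) /\
    #|` C'| = #|` C| /\
    list_decodable P (n%:R * N / n.+1%:R) L C'.
Proof.
move=> P0 N0 L2 C [Cin Cball].
pose f (x : 'rV[R]_n) := lft (Num.sqrt (n.+1%:R * P - sq x)) x.
have finj : injective f.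
  move=> x y; rewrite /f => E.
  have /rowP H := E.
  apply/rowP => j; have := H (lift ord_max j); by rewrite !mxE liftK.
have sqle x : x \in C -> sq x <= n%:R * P.
  move=> /Cin; rewrite /norm2 -/(sq x) ler_sqrt //.
  by apply: mulr_ge0 => //; apply: ltW.
have normf x : x \in C -> norm2 (f x) = Num.sqrt (n.+1%:R * P).
  move=> xC; rewrite /norm2 sum_split /f /lft !mxE unlift_none /=.
  under eq_bigr => i _ do rewrite mxE liftK /=.
  rewrite -/(sq x) sqr_sqrtr; first by congr Num.sqrt; rewrite addrNK.
  rewrite subr_ge0; apply: (le_trans (sqle x xC)).
  rewrite ler_wpM2r ?ltW //.
  by rewrite ltr_nat.
exists (f @` C); split; last split.
- by move=> x' /imfsetP [x xC ->]; apply: normf.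
- by rewrite card_imfset //= -cardfE.
split.
- by move=> x' /imfsetP [x xC ->]; rewrite normf.
move=> y.
pose py : 'rV[R]_n := \row_j y ord0 (lift ord_max j).
have Hr : n.+1%:R * (n%:R * N / n.+1%:R) = n%:R * N :> R.
  by rewrite mulrCA mulfV ?mulr1 // pnatr_eq0.
rewrite Hr.
apply: leq_trans (Cball py).
have sub : [fset x' in f @` C | norm2 (x' - y) <= Num.sqrt (n%:R * N)]
  `<=` f @` [fset x in C | norm2 (x - py) <= Num.sqrt (n%:R * N)].
  apply/fsubsetP => x' /imfsetP [z /= /andP [/imfsetP [x xC ->] Hx] ->].
  apply/imfsetP; exists x => //; rewrite !inE /= xC /=.
  apply: le_trans Hx; rewrite /norm2 ler_sqrt; last first.
    by apply: sumr_ge0 => i _; rewrite sqr_ge0.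
  rewrite sum_split.
  under eq_bigr => i _ do rewrite !mxE.
  under [X in (_ <= _ + X)%R]eq_bigr => i _ do rewrite !mxE liftK /=.
  by apply: ler_wpDl; rewrite // sqr_ge0.
apply: leq_trans (fsubset_leq_card sub) _.
by rewrite card_imfset //= -cardfE.
Qed.
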